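(* If $q=1$, the unique optimal solution is the profile in which all users choose DP (i.e., $u_i=n_i$ and $v_i=0$ for all $i\in[m]$). If $q=0$, a pure strategy profile is optimal if and only if $|y_i-y_j|\le 1$ for all $i,j\in[m]$, where $y_i=u_i+v_i$.
   Context: Network model: there are $m\ge 2$ source nodes $s_1,\dots,s_m$ and one destination $d$. Source $s_i$ has a set $N_i$ of $n_i$ users. Each user generates an independent Poisson flow of packets of rate $\phi>0$; each direct link $(s_i,d)$ has service rate $\mu>0$; each sidelink loses packets independently with probability $q\in[0,1]$, and $\bar q=1-q$. A pure strategy of a user in $N_i$ is either the direct path (DP) $(s_i,d)$ or an indirect path (IP) $(s_i,s_j,d)$, $j\neq i$. For a pure profile, $u_i$ is the number of users of $N_i$ choosing DP and $v_i$ the number of users of other sources choosing an IP $(s_j,s_i,d)$. With $T_i=u_i\phi+v_i\bar q\phi$, the total traffic rate is $TR=\sum_i\frac{\mu T_i}{T_i+\mu}$; an optimal solution is a pure profile maximizing $TR$. *)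

(* Defs.v *)
From mathcomp Require Import all_boot all_order all_algebra.
Set Implicit Arguments. Unset Strict Implicit. Unset Printing Implicit Defensive.
Import Order.TTheory GRing.Theory Num.Theory.
Local Open Scope ring_scope.

(* A pure strategy profile assigns to user k of source i the relay source
   (s i k) : 'I_m.  s i k = i means the direct path (s_i,d); s i k = j <> i
   means the indirect path (s_i, s_j, d). *)
Definition profile (m : nat) (n : 'I_m -> nat) := forall i : 'I_m, 'I_(n i) -> 'I_m.

Definition u_cnt m (n : 'I_m -> nat) (s : profile n) (i : 'I_m) : nat :=
  #|[pred k : 'I_(n i) | s i k == i]|.

Definition v_cnt m (n : 'I_m -> nat) (s : profile n) (i : 'I_m) : nat :=
  (\sum_(j : 'I_m | j != i) #|[pred k : 'I_(n j) | s j k == i]|)%N.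

Definition Tload (R : realFieldType) m (n : 'I_m -> nat) (phi q : R)
  (s : profile n) (i : 'I_m) : R :=
  (u_cnt s i)%:R * phi + (v_cnt s i)%:R * (1 - q) * phi.

Definition TR (R : realFieldType) m (n : 'I_m -> nat) (phi mu q : R)
  (s : profile n) : R :=
  \sum_(i : 'I_m) mu * Tload phi q s i / (Tload phi q s i + mu).

Definition optimal (R : realFieldType) m (n : 'I_m -> nat) (phi mu q : R)
  (s : profile n) : Prop :=
  forall s' : profile n, TR phi mu q s' <= TR phi mu q s.

Definition allDP m (n : 'I_m -> nat) : profile n := fun i _ => i.

(* Main.v *)
Require Import Defs.
From mathcomp Require Import all_boot all_order all_algebra.
From mathcomp Require Import zify ring lra.
Set Implicit Arguments. Unset Strict Implicit.
Import Order.TTheory GRing.Theory Num.Theory.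
Local Open Scope ring_scope.

Definition ycnt m (n : 'I_m -> nat) (s : profile n) (i : 'I_m) : nat :=
  (\sum_(j : 'I_m) #|[pred k : 'I_(n j) | s j k == i]|)%N.

Lemma ycntE m (n : 'I_m -> nat) (s : profile n) i :
  (u_cnt s i + v_cnt s i)%N = ycnt s i.
Proof. by rewrite /ycnt (bigD1 i) //=. Qed.

Lemma ycnt_sum m (n : 'I_m -> nat) (s : profile n) :
  (\sum_i ycnt s i = \sum_j n j)%N.
Proof.
rewrite /ycnt.
transitivity (\sum_(i:'I_m) \sum_(j : 'I_m) \sum_(k : 'I_(n j) | s j k == i) 1)%N.
  by apply: eq_bigr => i _; apply: eq_bigr => j _; rewrite -sum1_card.
rewrite exchange_big /=; apply: eq_bigr => j _.
rewrite (eq_bigr (fun i => \sum_(k : 'I_(n j)) (if s j k == i then 1 else 0))%N);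
  last by move=> i _; rewrite big_mkcond.
rewrite exchange_big /= -[RHS]card_ord -sum1_card; apply: eq_bigr => k _.
by rewrite -big_mkcond (big_pred1 (s j k)) // => x; rewrite /= eq_sym.
Qed.

Definition mv m (n : 'I_m -> nat) (s : profile n) (j0 : 'I_m) (k0 : 'I_(n j0))
  (t : 'I_m) : profile n :=
  fun j k => if (j == j0) && (val k == val k0) then t else s j k.

Lemma ycnt_mv m (n : 'I_m -> nat) (s : profile n) j0 (k0 : 'I_(n j0)) t i :
  (ycnt (mv s k0 t) i + (s j0 k0 == i) = ycnt s i + (t == i))%N.
Proof.
rewrite /ycnt (bigD1 j0) //= [in RHS](bigD1 j0) //=.
rewrite (eq_bigr (fun j => #|[pred k : 'I_(n j) | s j k == i]|)); last first.
  by move=> j /negbTE hj; apply: eq_card => k; rewrite !inE /mv hj.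
rewrite (cardD1 k0) [in RHS](cardD1 k0).
have -> : #|[predD1 [pred k : 'I_(n j0) | @mv _ _ s j0 k0 t j0 k == i] & k0]| =
          #|[predD1 [pred k | s j0 k == i] & k0]|.
  apply: eq_card => k; rewrite !inE /mv eqxx /=.
  case: (eqVneq k k0) => [->|hk]; rewrite ?eqxx //.
  by have -> : (nat_of_ord k == nat_of_ord k0) = false by exact: negbTE hk.
rewrite !inE /mv !eqxx /=.
ring.
Qed.

Definition G (R : realFieldType) (phi mu : R) (x : nat) : R :=
  mu * (x%:R * phi) / (x%:R * phi + mu).
Definition D (R : realFieldType) (phi mu : R) (x : nat) : R :=
  G phi mu x.+1 - G phi mu x.

Lemma DE (R : realFieldType) (phi mu : R) x : 0 < phi -> 0 < mu ->
  D phi mu x = mu ^+ 2 * phi / ((x%:R * phi + mu) * (x.+1%:R * phi + mu)).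
Proof.
move=> hp hm.
have h0 : 0 <= x%:R :> R by exact: ler0n.
have h1 : x%:R * phi + mu != 0 by rewrite gt_eqF //; nra.
have h2 : x.+1%:R * phi + mu != 0 by rewrite gt_eqF // -addn1 natrD; nra.
rewrite /D /G -addn1 natrD in h2 *; field; by rewrite h1 h2.
Qed.

Lemma D_gt0 (R : realFieldType) (phi mu : R) x : 0 < phi -> 0 < mu ->
  0 < D phi mu x.
Proof.
move=> hp hm; rewrite DE //.
have h0 : 0 <= x%:R :> R by exact: ler0n.
have h1 : 0 < x.+1%:R :> R by rewrite ltr0n.
apply: divr_gt0; first by apply: mulr_gt0 => //; apply: exprn_gt0.
apply: mulr_gt0; nra.
Qed.

Lemma D_lt (R : realFieldType) (phi mu : R) a b : 0 < phi -> 0 < mu ->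
  (a < b)%N -> D phi mu b < D phi mu a.
Proof.
move=> hp hm hab; rewrite !DE //.
have ha : 0 <= a%:R :> R by exact: ler0n.
have hb : a%:R + 1 <= b%:R :> R by rewrite natr1 ler_nat.
have hP : forall x : nat, 0 < (x%:R * phi + mu) * (x.+1%:R * phi + mu) :> R.
  move=> x; have : 0 <= x%:R :> R by exact: ler0n.
  move=> hx; rewrite -addn1 natrD; apply: mulr_gt0; nra.
rewrite ltr_pM2l; last by apply: mulr_gt0 => //; apply: exprn_gt0.
rewrite ltf_pV2 ?posrE ?hP //.
have hb1 : (a.+1 < b.+1)%N by [].
have hA : 0 <= a.+1%:R :> R by exact: ler0n.
apply: ltr_pM.
- by apply: addr_ge0; [apply: mulr_ge0 => //; exact: ltW|exact: ltW].
- by apply: addr_ge0; [apply: mulr_ge0 => //; exact: ltW|exact: ltW].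
- by rewrite ltrD2r ltr_pM2r // ltr_nat.
- by rewrite ltrD2r ltr_pM2r // ltr_nat.
Qed.

Lemma D_le (R : realFieldType) (phi mu : R) a b : 0 < phi -> 0 < mu ->
  (a <= b)%N -> D phi mu b <= D phi mu a.
Proof.
move=> hp hm; rewrite leq_eqVlt => /orP [/eqP -> //| h].
exact/ltW/D_lt.
Qed.

Lemma G_lt (R : realFieldType) (phi mu : R) a b : 0 < phi -> 0 < mu ->
  (a < b)%N -> G phi mu a < G phi mu b.
Proof.
move=> hp hm /subnKC <-; elim: (b - a.+1)%N => [|k IH].
  by rewrite addn0 -subr_gt0 -/(D phi mu a) D_gt0.
apply: (lt_trans IH); rewrite addnS -subr_gt0; exact: D_gt0.
Qed.

Lemma G_le (R : realFieldType) (phi mu : R) a b : 0 < phi -> 0 < mu ->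
  (a <= b)%N -> G phi mu a <= G phi mu b.
Proof.
move=> hp hm; rewrite leq_eqVlt => /orP [/eqP -> //| h].
exact/ltW/G_lt.
Qed.

Lemma G_up (R : realFieldType) (phi mu : R) a k : 0 < phi -> 0 < mu ->
  G phi mu (a + k) <= G phi mu a + k%:R * D phi mu a.
Proof.
move=> hp hm; elim: k => [|k IH]; first by rewrite addn0 mul0r addr0.
have : D phi mu (a + k) <= D phi mu a by apply: D_le => //; exact: leq_addr.
rewrite /D addnS -natr1 => h; rewrite /D in IH; lra.
Qed.

Lemma G_down (R : realFieldType) (phi mu : R) x k : 0 < phi -> 0 < mu ->
  G phi mu x + k%:R * D phi mu (x + k) <= G phi mu (x + k).
Proof.
move=> hp hm; elim: k => [|k IH]; first by rewrite addn0 mul0r addr0.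
have h1 : D phi mu (x + k.+1) <= D phi mu (x + k) by apply: D_le => //; rewrite addnS.
have h0 : 0 <= k%:R :> R by exact: ler0n.
have : G phi mu (x + k.+1) = G phi mu (x + k) + D phi mu (x + k) by rewrite /D addnS; ring.
rewrite -natr1; nra.
Qed.

Lemma G_tangent (R : realFieldType) (phi mu : R) a x : 0 < phi -> 0 < mu ->
  G phi mu x <= G phi mu a + (x%:R - a%:R) * D phi mu a.
Proof.
move=> hp hm; case: (leqP a x) => h.
  by have := G_up a (x - a) hp hm; rewrite (subnKC h) natrB.
have h' : (x <= a)%N by exact: ltnW.
have := G_down x (a - x) hp hm; rewrite (subnKC h') natrB // => h2.
lra.
Qed.

Lemma TR1 (R : realFieldType) m (n : 'I_m -> nat) (phi mu : R) (s : profile n) :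
  TR phi mu 1 s = \sum_i G phi mu (u_cnt s i).
Proof. by apply: eq_bigr => i _; rewrite /Tload subrr mulr0 mul0r addr0. Qed.

Lemma TR0 (R : realFieldType) m (n : 'I_m -> nat) (phi mu : R) (s : profile n) :
  TR phi mu 0 s = \sum_i G phi mu (ycnt s i).
Proof.
by apply: eq_bigr => i _; rewrite /Tload subr0 mulr1 -mulrDl -natrD ycntE.
Qed.

Theorem corollary1 (R : realFieldType) (m : nat) (n : 'I_m -> nat) (phi mu : R) :
  (2 <= m)%N -> 0 < phi -> 0 < mu ->
  (* q = 1: the all-DP profile is the unique optimal solution *)
  (optimal phi mu 1 (@allDP m n) /\
   forall s : profile n, optimal phi mu 1 s -> forall i (k : 'I_(n i)), s i k = i)
  /\
  (* q = 0: s is optimal iff |y_i - y_j| <= 1 for all i, j, with y_i = u_i + v_i *)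
  (forall s : profile n,
     optimal phi mu 0 s <->
     forall i j : 'I_m,
       `| ((u_cnt s i + v_cnt s i)%:Z - (u_cnt s j + v_cnt s j)%:Z)%R | <= 1).
Proof.
move=> hm2 hp hm.
have hall : forall i, u_cnt (@allDP m n) i = n i.
  move=> i; rewrite /u_cnt -[RHS]card_ord; apply: eq_card => k.
  by rewrite inE /allDP eqxx.
have hu : forall (s : profile n) i, (u_cnt s i <= n i)%N.
  by move=> s i; rewrite -[X in (_ <= X)%N]card_ord max_card.
split; first split.
- move=> s'; rewrite !TR1; apply: ler_sum => i _; rewrite hall; exact: G_le.
- move=> s hopt i k; apply/eqP; apply/negPn/negP => hk.
  have hlt : (u_cnt s i < n i)%N.
    rewrite /u_cnt; set A := [pred k : 'I_(n i) | s i k == i].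
    have hC := cardC A; rewrite card_ord in hC.
    have : (0 < #|[predC A]|)%N by apply/card_gt0P; exists k; rewrite !inE.
    move=> h; move: hC h; move: #|A| #|[predC A]| => a c h1 h2; lia.
  have := hopt (@allDP m n); rewrite !TR1 (bigD1 i) //= [X in _ <= X](bigD1 i) //=.
  apply/negP; rewrite -ltNge hall.
  apply: ltr_leD; first exact: G_lt.
  by apply: ler_sum => j _; rewrite hall; exact: G_le.
move=> s.
have yE : forall i j,
    `| ((u_cnt s i + v_cnt s i)%:Z - (u_cnt s j + v_cnt s j)%:Z)%R | <= 1 =
    ((ycnt s i <= (ycnt s j).+1) && (ycnt s j <= (ycnt s i).+1))%N.
  move=> i j; rewrite !ycntE.
  apply/idP/andP => [h|[h1 h2]]; first (split; lia). lia.
split.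
- move=> hopt.
  suff key : forall i j, (ycnt s i <= (ycnt s j).+1)%N.
    by move=> i j; rewrite yE key key.
  move=> i j; rewrite leqNgt; apply/negP => hij.
  have hji : j != i by apply/eqP => e; rewrite e in hij; lia.
  case: (pickP (fun j0 => 0 < #|[pred k : 'I_(n j0) | s j0 k == i]|)%N) =>
     [j0 hj0 | hnone]; last first.
    have : ycnt s i = 0%N.
      by rewrite /ycnt big1 // => j0 _; have := hnone j0; lia.
    lia.
  case/card_gt0P: hj0 => k0; rewrite inE => /eqP hk0.
  have hy := ycnt_mv s k0 j.
  have hyi := hy i; have hyj := hy j.
  rewrite hk0 eqxx (negbTE hji) in hyi.
  rewrite hk0 eqxx (eq_sym i) (negbTE hji) in hyj.
  have := hopt (mv s k0 j); rewrite !TR0.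
  apply/negP; rewrite -ltNge.
  rewrite (bigD1 i) //= [X in _ < X](bigD1 i) //=.
  rewrite (bigD1 j hji) /= [X in _ < _ + X](bigD1 j hji) /=.
  have -> : \sum_(l | (l != i) && (l != j)) G phi mu (ycnt (mv s k0 j) l) =
            \sum_(l | (l != i) && (l != j)) G phi mu (ycnt s l).
    apply: eq_bigr => l /andP [hli hlj]; congr G.
    have := hy l; rewrite hk0 (eq_sym i) (eq_sym j) (negbTE hli) (negbTE hlj).
    lia.
  set yi := ycnt s i; set yj := ycnt s j.
  have e1 : yi = (ycnt (mv s k0 j) i).+1 by rewrite /yi; lia.
  have e2 : ycnt (mv s k0 j) j = yj.+1 by rewrite /yj; lia.
  rewrite e1 e2.
  have hd : D phi mu (ycnt (mv s k0 j) i) < D phi mu yj.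
    apply: D_lt => //; rewrite /yi /yj in hij *; lia.
  rewrite /D in hd; lra.
- move=> hbal s'.
  have hb : forall i j, (ycnt s i <= (ycnt s j).+1)%N.
    by move=> i j; have := hbal i j; rewrite yE => /andP [].
  have m0 : (0 < m)%N by lia.
  pose i0 : 'I_m := Ordinal m0.
  case: (arg_minnP (ycnt s) (isT : xpredT i0)) => i1 _ hmin.
  set a := ycnt s i1.
  have hya : forall i, ycnt s i = a \/ ycnt s i = a.+1.
    move=> i; have := hmin i isT; have := hb i i1; rewrite /a; lia.
  have hsum : forall t : profile n,
      \sum_i (G phi mu a + ((ycnt t i)%:R - a%:R) * D phi mu a) =
      \sum_(i : 'I_m) G phi mu a + ((\sum_j n j)%:R - \sum_(i : 'I_m) a%:R) * D phi mu a.
    move=> t; rewrite big_split /=; congr (_ + _); rewrite -mulr_suml sumrB -natr_sum ycnt_sum.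
    by [].
  rewrite !TR0.
  apply: (le_trans (y := \sum_i (G phi mu a + ((ycnt s' i)%:R - a%:R) * D phi mu a))).
    by apply: ler_sum => i _; exact: G_tangent.
  rewrite hsum -(hsum s) le_eqVlt; apply/orP; left; apply/eqP.
  apply: eq_bigr => i _.
  case: (hya i) => ->; first by rewrite subrr mul0r addr0.
  by rewrite -natr1 addrAC subrr add0r mul1r /D addrC subrK.
Qed.
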